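(* Let $\lambda>0$ and let $\mu,m,g,\varkappa,\sigma_t$ be as described below. Then $$\lim_{t\to\infty}\sigma_t\,t\,g''(\lambda\sigma_t)=-\varkappa\lambda^{-2}\qquad\text{and}\qquad\lim_{t\to\infty}\sigma_t\,g'(\lambda\sigma_t)=0.$$
   Context: $\mu$ is a probability distribution on $(0,1)$, and $m(x)=-\log\mu((x,1))$ for $x\in[0,1)$ is twice differentiable on $[0,1)$ with $m'>0$ and $m''>0$ there, $\lim_{x\uparrow1}m''(x)/(m'(x))^2=0$, $\lim_{x\uparrow1}m''(x)m(x)x/(m'(x))^2=\varkappa$ for some $\varkappa>0$, and $\lim_{x\uparrow1}m(x)/m'(x)=0$. $g=m^{-1}:[0,\infty)\to[0,1)$. For all sufficiently large $t$, $\sigma_t$ denotes the unique solution $x\in[0,t)$ of $(\log g)'(\lambda x)=\frac1{\lambda(t-x)}$. *)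

(* Defs.v *)
From HB Require Import structures.
From mathcomp Require Import all_boot all_order all_algebra.
From mathcomp Require Import all_classical all_reals all_analysis.
Set Implicit Arguments. Unset Strict Implicit. Unset Printing Implicit Defensive.
Import Order.TTheory GRing.Theory Num.Theory.
Import numFieldNormedType.Exports.
Local Open Scope classical_set_scope.
Local Open Scope ring_scope.

Definition mlogtail (R : realType) (mu : probability R R) (x : R) : R :=
  - ln (fine (mu `]x, 1[%classic)).

(* x solves (log g)'(lam x) = 1/(lam (t - x)); log g must be defined at lam x,
   i.e. g (lam x) > 0, and differentiable there. *)
Definition sigma_eq (R : realType) (g : R -> R) (lam t x : R) : Prop :=
  0 < g (lam * x) /\
  derivable (fun y => ln (g y)) (lam * x) 1 /\
  derive1 (fun y => ln (g y)) (lam * x) = (lam * (t - x))^-1.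

(* Main.v *)
Require Import Defs.
From HB Require Import structures.
From mathcomp Require Import all_boot all_order all_algebra.
From mathcomp Require Import all_classical all_reals all_analysis.
Import Order.TTheory GRing.Theory Num.Theory.
Import numFieldNormedType.Exports.
Local Open Scope classical_set_scope.
Local Open Scope ring_scope.
From mathcomp Require Import ring lra.
Lemma is_derive1_comp' (R : realType) (f h : R -> R) (x a b : R) :
  is_derive x 1 f a -> is_derive (f x) 1 h b -> is_derive x 1 (h \o f) (b * a).
Proof.
move=> [df Df] [dh Dh].
have dc : derivable (h \o f) x 1.
  apply/derivable1_diffP/differentiable_comp; exact/derivable1_diffP.
apply: DeriveDef => //.
have E := @derive1_comp R f h x df dh.
rewrite derive1E in E; rewrite E !derive1E Df Dh; done.
Qed.

Lemma mono_helper (R : realType) (f df : R -> R) (a b : R) :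
  (forall x : R, 0 < x < 1 -> is_derive x 1 f (df x)) ->
  (forall x : R, 0 < x < 1 -> 0 < df x) ->
  0 < a -> a <= b -> b < 1 -> f a <= f b.
Proof.
move=> Hd Hp a0 ab b1.
have Hin : forall z, a <= z <= b -> 0 < z < 1.
  move=> z /andP[az zb]; apply/andP; split; [exact: lt_le_trans az|exact: le_lt_trans b1].
apply: (@ger0_derive1_ndecr R f a b) => //.
- move=> z; rewrite in_itv/= => /andP[az zb].
  have Hz : 0 < z < 1 by apply: Hin; rewrite !ltW.
  by case: (Hd z Hz).
- move=> z; rewrite in_itv/= => /andP[az zb].
  have Hz : 0 < z < 1 by apply: Hin; rewrite !ltW.
  by rewrite derive1E; case: (Hd z Hz) => _ ->; apply/ltW/Hp.
- apply: continuous_in_subspaceT => z; rewrite inE /= in_itv /= => zab.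
  have [dz _] := Hd z (Hin z zab).
  exact/differentiable_continuous/derivable1_diffP.
Qed.
Lemma g_deriv (R : realType) (m m1 g : R -> R) (y : R) :
  (forall x : R, 0 < x < 1 -> is_derive x 1 m (m1 x)) ->
  (forall x : R, 0 < x < 1 -> 0 < m1 x) ->
  (forall y : R, 0 <= y -> 0 <= g y < 1 /\ m (g y) = y) ->
  (forall x : R, 0 <= x < 1 -> g (m x) = x) ->
  m 0 = 0 -> 0 < y ->
  0 < g y < 1 /\ is_derive y 1 g (m1 (g y))^-1.
Proof.
move=> Hd Hp Hg Hinv m0 y0.
have [/andP[g0 g1] mg] := Hg y (ltW y0).
have gpos : 0 < g y.
  rewrite lt_neqAle g0 andbT; apply/eqP => E.
  by move: mg; rewrite -E m0 => h; rewrite -h ltxx in y0.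
have xI : g y \in `]0, 1[ by rewrite in_itv/= gpos g1.
split; first by rewrite gpos g1.
have H := @is_derive_inverse R m g (m1 (g y)) (g y).
rewrite mg in H; apply: H.
- near=> z.
  have : z \in `]0, 1[ by near: z; exact: near_in_itvoo.
  by rewrite in_itv/= => /andP[z0 z1]; apply: Hinv; rewrite ltW ?z0.
- near=> z.
  have : z \in `]0, 1[ by near: z; exact: near_in_itvoo.
  rewrite in_itv/= => zI; have [dz _] := Hd z zI.
  exact/differentiable_continuous/derivable1_diffP.
- by apply: Hd; rewrite gpos g1.
- by rewrite gt_eqF// Hp// gpos g1.
Unshelve. all: by end_near. Qed.

Theorem lemma9 (R : realType) (mu : probability R R)
  (m1 m2 : R -> R) (kappa lam : R) (g sigma : R -> R) :
  mu `]0, 1[%classic = 1%E ->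
  (forall x : R, 0 < x < 1 -> is_derive x 1 (mlogtail mu) (m1 x)) ->
  (forall x : R, 0 < x < 1 -> is_derive x 1 m1 (m2 x)) ->
  (fun h : R => h^-1 * (mlogtail mu h - mlogtail mu 0)) @ 0^'+ --> m1 0 ->
  (fun h : R => h^-1 * (m1 h - m1 0)) @ 0^'+ --> m2 0 ->
  (forall x : R, 0 <= x < 1 -> 0 < m1 x) ->
  (forall x : R, 0 <= x < 1 -> 0 < m2 x) ->
  (fun x : R => m2 x / (m1 x) ^+ 2) @ 1^'- --> 0 ->
  0 < kappa ->
  (fun x : R => m2 x * mlogtail mu x * x / (m1 x) ^+ 2) @ 1^'- --> kappa ->
  (fun x : R => mlogtail mu x / m1 x) @ 1^'- --> 0 ->
  (forall y : R, 0 <= y -> 0 <= g y < 1 /\ mlogtail mu (g y) = y) ->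
  (forall x : R, 0 <= x < 1 -> g (mlogtail mu x) = x) ->
  0 < lam ->
  (\forall t \near +oo,
     [/\ 0 <= sigma t < t, sigma_eq g lam t (sigma t) &
         forall x : R, 0 <= x < t -> sigma_eq g lam t x -> x = sigma t]) ->
  (fun t : R => sigma t * t * derive1 (derive1 g) (lam * sigma t))
     @ +oo --> - kappa / lam ^+ 2
  /\ (fun t : R => sigma t * derive1 g (lam * sigma t)) @ +oo --> 0.
Proof.
move=> Hmu Hd1 Hd2 _ _ Hm1p Hm2p _ kpos HA HB Hg Hinv lpos Hsig.
set m := mlogtail mu in Hd1 HA HB Hg Hinv *.
have m0 : m 0 = 0 by rewrite /m /mlogtail Hmu /= ln1 oppr0.
have Hm1 : forall x : R, 0 < x < 1 -> 0 < m1 x.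
  by move=> x /andP[x0 x1]; apply: Hm1p; rewrite ltW.
have Hm2 : forall x : R, 0 < x < 1 -> 0 < m2 x.
  by move=> x /andP[x0 x1]; apply: Hm2p; rewrite ltW.
have l0 : lam != 0 by rewrite gt_eqF.
pose X t := g (lam * sigma t).
pose F x := (m x / lam) * ((m x + x * m1 x) / lam) *
            (- (m1 x) ^- 2 * (m2 x * (m1 x)^-1)).
pose G x := m x / lam * (m1 x)^-1.
have key : \forall t \near +oo, [/\ 0 < X t < 1,
   lam * t = m (X t) + X t * m1 (X t),
   sigma t * t * derive1 (derive1 g) (lam * sigma t) = F (X t) &
   sigma t * derive1 g (lam * sigma t) = G (X t)].
  have g0 : g 0 = 0 by rewrite -{1}m0 Hinv // lexx ltr01.
  apply: filterS Hsig => t [/andP[s0 st] [gp [dlg eq]] _].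
  have sp : 0 < sigma t.
    rewrite lt_neqAle s0 andbT; apply/eqP => E.
    by move: gp; rewrite -E mulr0 g0 ltxx.
  rewrite /X; set y := lam * sigma t.
  have y0 : 0 < y by rewrite mulr_gt0.
  have [/andP[x0 x1] dg] := @g_deriv _ _ _ _ _ Hd1 Hm1 Hg Hinv m0 y0.
  have my : m (g y) = y := (Hg y (ltW y0)).2.
  set x := g y.
  have x01 : 0 < x < 1 by rewrite x0 x1.
  have m1x : m1 x != 0 by rewrite gt_eqF // Hm1.
  have dlng := @is_derive1_comp' _ g (@ln R) y _ _ dg (is_derive1_ln x0).
  have [_ Dln] := dlng.
  rewrite derive1E in eq.
  have eq2 : x^-1 * (m1 x)^-1 = (lam * (t - sigma t))^-1.
    by rewrite -Dln; exact: eq.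
  have eq3 : x * m1 x = lam * (t - sigma t).
    by apply: invr_inj; rewrite invfM.
  have near_eq : \forall z \near y, (fun z => ((m1 \o g) z)^-1) z = derive1 g z.
    near=> z.
    have : z \in `]0, +oo[ by near: z; apply: near_in_itvoy; rewrite in_itv /= y0.
    rewrite in_itv /= andbT => z0.
    have [_ dgz] := @g_deriv _ _ _ _ _ Hd1 Hm1 Hg Hinv m0 z0.
    by rewrite derive1E; have [_ ->] := dgz.
  have dm1g := @is_derive1_comp' _ g m1 y _ _ dg (Hd2 x x01).
  have dV := is_deriveV m1x dm1g.
  have dd := @near_eq_is_derive _ _ _ _ _ _ _ _ near_eq dV.
  have dd' : is_derive y 1 (derive1 g) (- (m1 x) ^- 2 * (m2 x * (m1 x)^-1)) := dd.
  split => //.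
  - by rewrite my eq3 /y; ring.
  - rewrite derive1E; have [_ ->] := dd'.
    rewrite /F my eq3 /y; congr (_ * _); field.
    done.
  - rewrite derive1E; have [_ ->] := dg.
    rewrite /G my /y; field.
    by apply/andP; split.
have K1 : \forall t \near +oo, 0 < X t < 1 /\ lam * t = m (X t) + X t * m1 (X t).
  by apply: filterS key => t [].
have K2 : \forall t \near +oo,
   sigma t * t * derive1 (derive1 g) (lam * sigma t) = F (X t).
  by apply: filterS key => t [].
have K3 : \forall t \near +oo, sigma t * derive1 g (lam * sigma t) = G (X t).
  by apply: filterS key => t [].
have XL : X @ +oo --> 1^'-.
  move=> P; rewrite /at_left /within /= => /nbhs_ballP [e /= e0 HP].
  have [c [c0 c1 ce]] : exists c : R, [/\ 0 < c, c < 1 & 1 - c < e].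
    case: (ltP e 1) => he.
      exists (1 - e/2); split; lra.
    exists (1/2); split; lra.
  change (\forall t \near +oo, P (X t)).
  near=> t.
  have [/andP[X0 X1] Et] : 0 < X t < 1 /\ lam * t = m (X t) + X t * m1 (X t).
    by near: t.
  have Ht : lam^-1 * (m c + m1 c) < t.
    by near: t; apply: nbhs_pinfty_gt; rewrite num_real.
  rewrite ltr_pdivrMl // Et in Ht.
  have cX : c < X t.
    rewrite ltNge; apply/negP => Xc.
    have h1 : m (X t) <= m c := @mono_helper _ _ _ _ _ Hd1 Hm1 X0 Xc c1.
    have h2 : m1 (X t) <= m1 c := @mono_helper _ _ _ _ _ Hd2 Hm2 X0 Xc c1.
    have h3 : X t * m1 (X t) <= m1 (X t).
      by apply: ler_piMl; [apply/ltW/Hm1; rewrite X0 X1 | exact: ltW].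
    clear -h1 h2 h3 Ht; lra.
  apply: HP => //.
  rewrite /ball /= ger0_norm; clear -cX ce X1; lra.
have FL : F x @[x --> 1^'-] --> - kappa / lam ^+ 2.
  have pos1 : \forall x \near (1:R)^'-, 0 < x.
    have H : \forall z \near (1:R), z \in `]0, 2[.
      by apply: near_in_itvoo; rewrite in_itv/=; apply/andP; split; lra.
    near=> z; have : z \in `]0, 2[ by near: z; apply: (@cvg_within _ (nbhs (1:R))).
    by rewrite in_itv/= => /andP[].
  pose A x := m2 x * m x * x / m1 x ^+ 2.
  pose B x := m x / m1 x.
  apply: (@cvg_trans _ ((fun x => - (A x * B x / x + A x) / lam ^+ 2) @ 1^'-)).
    apply: near_eq_cvg; near=> x.
    have x0 : 0 < x by near: x; exact: pos1.
    have x1 : x < 1 by near: x; exact: nbhs_left_lt.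
    have m1x : m1 x != 0 by rewrite gt_eqF// Hm1// x0 x1.
    rewrite /F /A /B; field.
    by rewrite m1x l0 gt_eqF.
  have -> : - kappa / lam ^+ 2 = - (kappa * 0 / 1 + kappa) / lam ^+ 2.
    by rewrite mulr0 mul0r add0r.
  apply: cvgMr_tmp; apply: cvgN; apply: cvgD => //.
  apply: cvgM; first exact: cvgM.
  have HV : (fun x : R => x^-1) @ (1:R)^'- --> (1:R)^-1.
    apply: cvgV; first exact: oner_neq0.
    exact/cvg_at_left_filter/cvg_id.
  exact: HV.
have GL : G x @[x --> 1^'-] --> 0.
  have E : forall x, G x = (m x / m1 x) * lam^-1 by move=> x; rewrite /G mulrAC.
  rewrite (@eq_cvg _ _ _ _ _ _ E).
  have H := @cvgMr_tmp _ _ _ _ _ _ (lam^-1) HB.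
  rewrite mul0r in H; exact: H.
split.
- apply: cvg_trans (cvg_comp X F XL FL).
  by apply: near_eq_cvg; apply: filterS K2.
- apply: cvg_trans (cvg_comp X G XL GL).
  by apply: near_eq_cvg; apply: filterS K3.
Unshelve. all: by end_near. Qed.
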